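(* Fix $n,\mu\in\mathbb{N}$ and $\delta\in\mathbb{R}$. Let $S$ be the set of pairs $(x,z)\in(0,+\infty)^n\times(-\delta,+\infty)^n$ such that $x_1\geq x_2\geq\cdots\geq x_n$ and, writing $p_i=x_i^{1/\mu}-\delta$ (so that $x=(p+\delta)^{\mu\downarrow}$), $$(p+\delta)^{\mu}\succ_w (z+\delta)^{\mu}\quad\text{and}\quad \sum_{i=1}^n (p_i+\delta)^k\geq\sum_{i=1}^n (z_i+\delta)^k\ \text{ for all }k\in\{1,\dots,\mu-1\}.$$ Then $S$ is a convex subset of $\mathbb{R}^n\times\mathbb{R}^n$.
   Context: $(y+\delta)^\mu$ denotes the vector with components $(y_i+\delta)^\mu$, and $y^{\downarrow}$ the vector of components of $y$ sorted in descending order. $x\succ_w y$ (weak majorization) means $\sum_{i=1}^k x^{\downarrow}_i\geq\sum_{i=1}^k y^{\downarrow}_i$ for all $k=1,\dots,n$. (These are the hypotheses of a sufficient condition for $K\prod(s-z_i)/\prod(s-p_i)$, $K>0$, with real zeros and poles, to be logarithmically completely monotonic.) *)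

(* Defs.v *)
From HB Require Import structures.
From mathcomp Require Import all_boot all_order all_algebra.
From mathcomp Require Import reals exp.
Set Implicit Arguments. Unset Strict Implicit. Unset Printing Implicit Defensive.
Import Order.TTheory GRing.Theory Num.Theory.
Local Open Scope ring_scope.

Definition desc (R : realType) (n : nat) (y : 'I_n -> R) : seq R :=
  sort (fun a b : R => b <= a) [seq y i | i <- enum 'I_n].

Definition weakly_majorizes (R : realType) (n : nat) (x y : 'I_n -> R) : Prop :=
  forall k : nat, (1 <= k <= n)%N ->
    \sum_(i < k) nth 0 (desc y) i <= \sum_(i < k) nth 0 (desc x) i.

Definition S_set (R : realType) (n mu : nat) (delta : R)
    (xz : ('I_n -> R) * ('I_n -> R)) : Prop :=
  let x := xz.1 in let z := xz.2 in
  let p := fun i => powR (x i) (mu%:R^-1) - delta in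
  (forall i, 0 < x i) /\ (forall i, - delta < z i) /\
  (forall i j : 'I_n, (i <= j)%N -> x j <= x i) /\
  weakly_majorizes (fun i => (p i + delta) ^+ mu) (fun i => (z i + delta) ^+ mu) /\
  (forall k : nat, (1 <= k <= mu - 1)%N ->
     \sum_(i < n) (z i + delta) ^+ k <= \sum_(i < n) (p i + delta) ^+ k).

Definition convex_pairs (R : realType) (n : nat)
    (S : ('I_n -> R) * ('I_n -> R) -> Prop) : Prop :=
  forall (u v : ('I_n -> R) * ('I_n -> R)) (t : R),
    S u -> S v -> 0 <= t <= 1 ->
    S ((fun i => t * u.1 i + (1 - t) * v.1 i),
       (fun i => t * u.2 i + (1 - t) * v.2 i)).

Arguments S_set {R} n mu delta xz.
Arguments convex_pairs {R} n S.

(* Main.v *)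
Require Import Defs.
From mathcomp Require Import all_boot all_order all_algebra.
From mathcomp Require Import reals exp.
From mathcomp Require Import interval_inference convex hoelder.
From mathcomp Require Import ring lra.
Import Order.TTheory GRing.Theory Num.Theory.
Set Implicit Arguments. Unset Strict Implicit.
Local Open Scope ring_scope.

Section C.
Variable R : realType.

Lemma key_sort (n : nat) (y : 'I_n -> R) :
  exists sg : 'I_n -> 'I_n, [/\ injective sg,
    (forall i : 'I_n, nth 0 (desc y) i = y (sg i)) &
    (forall i j : 'I_n, (i <= j)%N -> y (sg j) <= y (sg i))].
Proof.
set s := [seq y i | i <- enum 'I_n].
have hp : perm_eq (desc y) s by rewrite /desc perm_sort.
have [Is HIs Hd] := perm_iotaP 0 hp.
have ss : size s = n by rewrite size_map size_enum_ord.
have szI : size Is = n by rewrite (perm_size HIs) size_iota.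
have sz : size (desc y) = n by rewrite (perm_size hp).
have Hlt : forall i : 'I_n, (nth 0%N Is i < n)%N.
  move=> i; have : nth 0%N Is i \in Is by rewrite mem_nth // szI.
  by rewrite (perm_mem HIs) mem_iota ss.
exists (fun i => Ordinal (Hlt i)); split.
- move=> i j /(congr1 val) /= /eqP; rewrite nth_uniq ?szI //.
    by move/eqP/val_inj.
  by rewrite (perm_uniq HIs) iota_uniq.
- move=> i; rewrite Hd (nth_map 0%N) ?szI // /s (nth_map i) ?size_enum_ord //.
  congr y; apply: val_inj => /=.
  by rewrite -[nth 0%N Is i]/(val (Ordinal (Hlt i))) nth_ord_enum.
- move=> i j ij.
  have st : sorted (fun a b : R => b <= a) (desc y).
    by apply: sort_sorted => a b; apply: le_total.
  have := sorted_leq_nth (fun a b c (h1 : b >= a) h2 => le_trans h2 h1) (@lexx _ _) 0 st.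
  move=> /(_ i j); rewrite !inE sz !ltn_ord => /(_ isT isT ij).
  have E : forall i : 'I_n, nth 0 (desc y) i = y (Ordinal (Hlt i)).
    move=> i'; rewrite Hd (nth_map 0%N) ?szI // /s (nth_map i') ?size_enum_ord //.
    congr y; apply: val_inj => /=.
    by rewrite -[nth 0%N Is i']/(val (Ordinal (Hlt i'))) nth_ord_enum.
  by rewrite !E.
Qed.

Lemma L0 (n : nat) (y : 'I_n -> R) (B C : {set 'I_n}) (c : R) :
  #|B| = #|C| -> (forall i, i \in B :\: C -> y i <= c) ->
  (forall i, i \in C :\: B -> c <= y i) ->
  \sum_(i in B) y i <= \sum_(i in C) y i.
Proof.
move=> cBC h1 h2.
rewrite (big_setID C) [X in _ <= X](big_setID B) /= [C :&: B]setIC lerD2l.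
have e : #|B :\: C| = #|C :\: B|.
  have := cardsID C B; have := cardsID B C; rewrite [C :&: B]setIC cBC.
  by move=> <- /eqP; rewrite eqn_add2l => /eqP.
apply: (@le_trans _ _ (\sum_(i in B :\: C) c)); first by apply: ler_sum.
rewrite sumr_const e -sumr_const; exact: ler_sum.
Qed.

Lemma widen_inj (k n : nat) (Hk : (k <= n)%N) : injective (widen_ord Hk).
Proof. by move=> a b /(congr1 val) /= /val_inj. Qed.

Lemma L1 (n k : nat) (y : 'I_n -> R) (Hk : (k <= n)%N)
  (anti : forall i j : 'I_n, (i <= j)%N -> y j <= y i)
  (tau : 'I_k -> 'I_n) : injective tau ->
  \sum_(i < k) y (tau i) <= \sum_(i < k) y (widen_ord Hk i).
Proof.
move=> itau.
case: k Hk tau itau => [|k] Hk tau itau; first by rewrite !big_ord0.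
have Hc : (k < n)%N by [].
rewrite -(big_imset (fun j => y j) (h := tau) (A := predT)); last by move=> a b _ _; apply: itau.
rewrite -(big_imset (fun j => y j) (h := widen_ord Hk) (A := predT)); last by move=> a b _ _; apply: widen_inj.
apply: (L0 (c := y (Ordinal Hc))).
- rewrite !card_imset //; try exact: widen_inj; try exact: itau.
- move=> i /setDP [_ H]; apply: anti => /=.
  rewrite leqNgt; apply/negP => ik; move: H; apply/negP/negPn/imsetP.
  by exists ((@Ordinal k.+1 i (ltnW ik))) => //; apply: val_inj.
- move=> i /setDP [/imsetP [j _ ->] _]; apply: anti => /=.
  by rewrite -ltnS.
Qed.

Definition topk (n : nat) (y : 'I_n -> R) (k : nat) :=
  \sum_(i < k) nth 0 (desc y) i.

Lemma topk_sg (n k : nat) (y : 'I_n -> R) (Hk : (k <= n)%N) sg :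
  (forall i : 'I_n, nth 0 (desc y) i = y (sg i)) ->
  topk y k = \sum_(i < k) y (sg (widen_ord Hk i)).
Proof.
move=> h; apply: eq_bigr => i _; exact: (h (widen_ord Hk i)).
Qed.

Lemma fact2 (n k : nat) (y : 'I_n -> R) (Hk : (k <= n)%N)
  (tau : 'I_k -> 'I_n) : injective tau ->
  \sum_(i < k) y (tau i) <= topk y k.
Proof.
move=> itau; have [sg [isg h1 h2]] := key_sort y.
rewrite (topk_sg Hk h1).
have := L1 (y := fun i => y (sg i)) Hk h2 (tau := fun i => invF isg (tau i)).
rewrite (eq_bigr (fun i => y (tau i))); last by move=> i _; rewrite f_invF.
apply; move=> a b /(can_inj (f_invF isg)); exact: itau.
Qed.

Lemma fact3 (n k : nat) (y : 'I_n -> R) (Hk : (k <= n)%N)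
  (anti : forall i j : 'I_n, (i <= j)%N -> y j <= y i) :
  topk y k <= \sum_(i < k) y (widen_ord Hk i).
Proof.
have [sg [isg h1 h2]] := key_sort y.
rewrite (topk_sg Hk h1); apply: L1 => // a b /isg; exact: widen_inj.
Qed.

Lemma topk_ext (n k : nat) (y y' : 'I_n -> R) : y =1 y' -> topk y k = topk y' k.
Proof. by move=> e; rewrite /topk /desc (eq_map e). Qed.

End C.
Section A.
Variable R : realType.
Local Open Scope convex_scope.

Lemma concave_powR (q a b t : R) : 0 < q -> q <= 1 -> 0 <= a -> 0 <= b ->
  0 <= t -> t <= 1 ->
  t * a `^ q + (1 - t) * b `^ q <= (t * a + (1 - t) * b) `^ q.
Proof.
move=> q0 q1 a0 b0 t0 t1.
have p1 : 1 <= q^-1 by rewrite invf_ge1.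
have H := convex_powR p1 (Itv01 t0 t1) (x := a `^ q) (y := b `^ q).
rewrite !classical_sets.in_setE /= !in_itv /= !andbT !powR_ge0 in H.
have {}H := H isT isT.
have {}H : (t * a `^ q + (1 - t) * b `^ q) `^ q^-1 <= t * (a `^ q) `^ q^-1 + (1 - t) * (b `^ q) `^ q^-1 := H.
rewrite -!powRrM !mulfV ?gt_eqF // !powRr1 // in H.
have := @ge0_ler_powR _ q (ltW q0) _ _ _ _ H.
rewrite -powRrM mulVf ?gt_eqF // powRr1 //.
  apply; first by rewrite nnegrE; apply: powR_ge0.
  by rewrite nnegrE; apply: addr_ge0; apply: mulr_ge0 => //; rewrite ?subr_ge0.
by apply: addr_ge0; apply: mulr_ge0 => //; rewrite ?subr_ge0 ?powR_ge0.
Qed.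

Lemma convex_exp (k : nat) (a b t : R) : 0 <= a -> 0 <= b ->
  0 <= t -> t <= 1 ->
  (t * a + (1 - t) * b) ^+ k <= t * a ^+ k + (1 - t) * b ^+ k.
Proof.
move=> a0 b0 t0 t1; case: k => [|k].
  by rewrite !expr0 !mulr1 subrKC.
have p1 : 1 <= k.+1%:R :> R by rewrite ler1n.
have H := convex_powR p1 (Itv01 t0 t1) (x := a) (y := b).
rewrite !classical_sets.in_setE /= !in_itv /= !andbT in H.
have {}H := H a0 b0.
have {}H : (t * a + (1 - t) * b) `^ k.+1%:R <= t * a `^ k.+1%:R + (1 - t) * b `^ k.+1%:R := H.
rewrite !powR_mulrn // in H.
by apply: addr_ge0; apply: mulr_ge0 => //; rewrite ?subr_ge0.
Qed.
End A.

Section M.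
Variable R : realType.

Lemma root_pow (mu k : nat) (delta x : R) : 0 <= x ->
  (powR x (mu%:R^-1) - delta + delta) ^+ k = powR x (mu%:R^-1 * k%:R).
Proof.
by move=> x0; rewrite subrK -powR_mulrn ?powR_ge0 // -powRrM.
Qed.

Lemma cpos (t a b : R) : 0 <= t -> t <= 1 -> 0 < a -> 0 < b -> 0 < t * a + (1 - t) * b.
Proof.
move=> t0 t1 a0 b0; have [->|tp] := eqVneq t 0; first by rewrite mul0r add0r subr0 mul1r.
have tp' : 0 < t by rewrite lt_neqAle eq_sym tp.
by apply: ltr_wpDr; [apply: mulr_ge0; rewrite ?subr_ge0 // ltW | apply: mulr_gt0].
Qed.
End M.

Theorem proposition8 (R : realType) (n mu : nat) (delta : R) :
  (0 < mu)%N -> convex_pairs n (S_set n mu delta).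
Proof.
move=> mu0 [x1 z1] [x2 z2] t; rewrite /S_set /=.
move=> [hx1 [hz1 [hs1 [hm1 hp1]]]] [hx2 [hz2 [hs2 [hm2 hp2]]]] /andP [t0 t1].
set X := fun i => t * x1 i + (1 - t) * x2 i.
set Z := fun i => t * z1 i + (1 - t) * z2 i.
have hX : forall i, 0 < X i by move=> i; apply: cpos.
have hZd : forall i, Z i + delta = t * (z1 i + delta) + (1 - t) * (z2 i + delta).
  by move=> i; rewrite /Z; ring.
have pd : forall z : R, - delta < z -> 0 < z + delta by move=> z h; lra.
have hZ : forall i, - delta < Z i.
  move=> i; have := hZd i; have := cpos t0 t1 (pd _ (hz1 i)) (pd _ (hz2 i)); lra.
split; first exact: hX.
split; first exact: hZ.
split.
  move=> i j ij; rewrite /X; apply: lerD; apply: ler_wpM2l; rewrite ?subr_ge0 //; by [apply: hs1 | apply: hs2].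
have muE : mu%:R^-1 * mu%:R = 1 :> R by rewrite mulVf // pnatr_eq0 -lt0n.
have eP : forall (x : 'I_n -> R), (forall i, 0 < x i) ->
   (fun i => (powR (x i) (mu%:R^-1) - delta + delta) ^+ mu) =1 x.
  by move=> x hx i /=; rewrite root_pow ?ltW // muE powRr1 // ltW.
split.
  move=> k /andP [k1 kn].
  change (is_true (topk (fun i => (Z i + delta) ^+ mu) k <=
          topk (fun i => (powR (X i) (mu%:R^-1) - delta + delta) ^+ mu) k)).
  have m1 := hm1 k; have m2 := hm2 k; rewrite k1 kn /= in m1 m2.
  have {}m1 := m1 isT; have {}m2 := m2 isT.
  change (is_true (topk (fun i => (z1 i + delta) ^+ mu) k <=
          topk (fun i => (powR (x1 i) (mu%:R^-1) - delta + delta) ^+ mu) k)) in m1.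
  change (is_true (topk (fun i => (z2 i + delta) ^+ mu) k <=
          topk (fun i => (powR (x2 i) (mu%:R^-1) - delta + delta) ^+ mu) k)) in m2.
  rewrite (topk_ext k (eP _ hX)).
  rewrite (topk_ext k (eP _ hx1)) in m1.
  rewrite (topk_ext k (eP _ hx2)) in m2.
  have [sg [isg h1 h2]] := key_sort (fun i => (Z i + delta) ^+ mu).
  rewrite (topk_sg kn h1).
  set tau := fun i => sg (widen_ord kn i).
  have itau : injective tau by move=> a b /isg /widen_inj.
  apply: (@le_trans _ _ (\sum_(i < k) (t * (z1 (tau i) + delta) ^+ mu + (1 - t) * (z2 (tau i) + delta) ^+ mu))).
    apply: ler_sum => i _; rewrite hZd; apply: convex_exp => //; apply: ltW; exact: pd.
  rewrite big_split /= -!mulr_sumr.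
  apply: (@le_trans _ _ (t * topk (fun i => (z1 i + delta) ^+ mu) k +
                         (1 - t) * topk (fun i => (z2 i + delta) ^+ mu) k)).
    by apply: lerD; apply: ler_wpM2l; rewrite ?subr_ge0 //; apply: fact2.
  apply: (@le_trans _ _ (t * topk x1 k + (1 - t) * topk x2 k)).
    by apply: lerD; apply: ler_wpM2l; rewrite ?subr_ge0.
  apply: (@le_trans _ _ (\sum_(i < k) X (widen_ord kn i))); last first.
exact: (@fact2 R n k X kn _ (@widen_inj k n kn)).
  rewrite /X big_split /= -!mulr_sumr.
  by apply: lerD; apply: ler_wpM2l; rewrite ?subr_ge0 //; apply: fact3.
move=> k /andP [k1 kmu].
apply: (@le_trans _ _ (\sum_(i < n) (t * (z1 i + delta) ^+ k + (1 - t) * (z2 i + delta) ^+ k))).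
  apply: ler_sum => i _; rewrite hZd; apply: convex_exp => //; apply: ltW; exact: pd.
rewrite big_split /= -!mulr_sumr.
apply: (@le_trans _ _ (t * \sum_(i < n) (powR (x1 i) (mu%:R^-1) - delta + delta) ^+ k +
                       (1 - t) * \sum_(i < n) (powR (x2 i) (mu%:R^-1) - delta + delta) ^+ k)).
  apply: lerD; apply: ler_wpM2l; rewrite ?subr_ge0 //.
    by apply: hp1; rewrite k1.
  by apply: hp2; rewrite k1.
rewrite !mulr_sumr -big_split /=; apply: ler_sum => i _.
rewrite (root_pow _ _ _ (ltW (hX i))) (root_pow _ _ _ (ltW (hx1 i))) (root_pow _ _ _ (ltW (hx2 i))).
apply: concave_powR => //; try exact: ltW.
- by apply: mulr_gt0; rewrite ?invr_gt0 ltr0n // (leq_trans _ k1).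
- rewrite mulrC ler_pdivrMr ?ltr0n // mul1r ler_nat (leq_trans kmu) //.
  by rewrite leq_subr.
Qed.
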